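(* Let $w_0>0$, $\theta\in\mathbb{R}$ and $\alpha_{\max}>0$. With the inner product $\langle x,y\rangle=\frac{w_0}{2\pi}\int_{-\pi/w_0}^{\pi/w_0}x(t)y(t)\,dt$ and $\psi_1(t)=\frac{3\sqrt5}{2\pi^2}w_0^2t^2-\frac{\sqrt5}{2}$, $\psi_2(t)=\frac{\sqrt3}{\pi}w_0t$, for $\alpha\in[0,\alpha_{\max}]$ and $\phi\in[-\pi,\pi]$ let $s_{\alpha,\phi}(t)=\alpha\sin(w_0t+\phi+\theta)$, $a^*(\alpha,\phi)=\langle s_{\alpha,\phi},\psi_1\rangle$, $b^*(\alpha,\phi)=\langle s_{\alpha,\phi},\psi_2\rangle$. Then the set $\{(a^*(\alpha,\phi),b^*(\alpha,\phi)):\alpha\in[0,\alpha_{\max}],\ \phi\in[-\pi,\pi]\}$ is the filled elliptical region (ellipse together with its interior) bounded by the ellipse $\{(a^*(\alpha_{\max},\phi),b^*(\alpha_{\max},\phi)):\phi\in[-\pi,\pi]\}$, and for each fixed $\phi$ the Euclidean distance of $(a^*(\alpha,\phi),b^*(\alpha,\phi))$ from the origin (the center of this ellipse) is proportional to $\alpha$.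
   Context: $\psi_1,\psi_2$ together with $\psi_3=1$ are orthonormal for this inner product; $a^*,b^*$ are the least-squares coefficients of the signal on $\psi_1,\psi_2$. *)

(* Defs.v *)
From Stdlib Require Import Reals Lra.
From Coquelicot Require Import Coquelicot.
Open Scope R_scope.

Definition inner (w0 : R) (x y : R -> R) : R :=
  w0 / (2 * PI) * RInt (fun t => x t * y t) (- PI / w0) (PI / w0).

Definition psi1 (w0 : R) (t : R) : R :=
  3 * sqrt 5 / (2 * PI ^ 2) * w0 ^ 2 * t ^ 2 - sqrt 5 / 2.

Definition psi2 (w0 : R) (t : R) : R := sqrt 3 / PI * w0 * t.

Definition sig (w0 theta alpha phi : R) (t : R) : R :=
  alpha * sin (w0 * t + phi + theta).

Definition astar (w0 theta alpha phi : R) : R :=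
  inner w0 (sig w0 theta alpha phi) (psi1 w0).

Definition bstar (w0 theta alpha phi : R) : R :=
  inner w0 (sig w0 theta alpha phi) (psi2 w0).

(* Main.v *)
Require Import Defs.
From Stdlib Require Import Reals Lra.
From Coquelicot Require Import Coquelicot.
Open Scope R_scope.
Lemma astar_eq w0 theta alpha phi : 0 < w0 ->
  astar w0 theta alpha phi = - (3 * sqrt 5 / PI ^ 2) * alpha * sin (phi + theta).
Proof.
intros hw. unfold astar, inner, sig, psi1.
set (K1 := 3 * sqrt 5 / (2 * PI ^ 2)). set (K0 := sqrt 5 / 2).
set (F := fun t => alpha * (K1 * (- (w0*t)^2 * cos (w0*t+phi+theta) + 2 * (w0*t) * sin (w0*t+phi+theta) + 2 * cos (w0*t+phi+theta)) + K0 * cos (w0*t+phi+theta)) / w0).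
assert (H : is_RInt (fun t => alpha * sin (w0 * t + phi + theta) * (K1 * w0 ^ 2 * t ^ 2 - K0)) (-PI/w0) (PI/w0) (F (PI/w0) - F (-PI/w0))).
{ apply (is_RInt_derive F).
  - intros x _. unfold F. auto_derive; [trivial|]. field. lra.
  - intros x _. apply (@ex_derive_continuous R_AbsRing R_NormedModule). auto_derive. trivial. }
unfold K1, K0 in *.
rewrite (is_RInt_unique _ _ _ _ H). unfold F.
replace (w0 * (PI / w0)) with PI by (field; lra).
replace (w0 * (-PI / w0)) with (-PI) by (field; lra).
assert (PI <> 0) by (generalize PI_RGT_0; lra).
replace (PI + phi + theta) with ((phi+theta)+PI) by ring.
replace (-PI + phi + theta) with ((phi+theta)-PI) by ring.
rewrite sin_plus, cos_plus, sin_minus, cos_minus, sin_PI, cos_PI.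
field. lra.
Qed.
Lemma bstar_eq w0 theta alpha phi : 0 < w0 ->
  bstar w0 theta alpha phi = (sqrt 3 / PI) * alpha * cos (phi + theta).
Proof.
intros hw. unfold bstar, inner, sig, psi2.
set (F := fun t => alpha * (sqrt 3 / PI) * (- (w0*t) * cos (w0*t+phi+theta) + sin (w0*t+phi+theta)) / w0).
assert (H : is_RInt (fun t => alpha * sin (w0 * t + phi + theta) * (sqrt 3 / PI * w0 * t)) (-PI/w0) (PI/w0) (F (PI/w0) - F (-PI/w0))).
{ apply (is_RInt_derive F).
  - intros x _. unfold F. auto_derive; [trivial|]. field. generalize PI_RGT_0; lra.
  - intros x _. apply (@ex_derive_continuous R_AbsRing R_NormedModule). auto_derive. trivial. }
rewrite (is_RInt_unique _ _ _ _ H). unfold F.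
replace (w0 * (PI / w0)) with PI by (field; lra).
replace (w0 * (-PI / w0)) with (-PI) by (field; lra).
assert (PI <> 0) by (generalize PI_RGT_0; lra).
replace (PI + phi + theta) with ((phi+theta)+PI) by ring.
replace (-PI + phi + theta) with ((phi+theta)-PI) by ring.
rewrite sin_plus, cos_plus, sin_minus, cos_minus, sin_PI, cos_PI.
field. lra.
Qed.

Lemma circle (s co : R) : s ^ 2 + co ^ 2 = 1 ->
  exists phi, - PI <= phi <= PI /\ sin phi = s /\ cos phi = co.
Proof.
intros H.
assert (Hc : -1 <= co <= 1) by (split; nra).
assert (Hs : sqrt (1 - co²) = Rabs s).
{ replace (1 - co²) with (s²) by (unfold Rsqr; nra). apply sqrt_Rsqr_abs. }
pose proof (acos_bound co).
destruct (Rle_dec 0 s).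
- exists (acos co). split; [lra|]. rewrite sin_acos, cos_acos by lra.
  rewrite Hs, Rabs_pos_eq by lra. auto.
- exists (- acos co). split; [lra|]. rewrite sin_neg, cos_neg, sin_acos, cos_acos by lra.
  rewrite Hs, Rabs_left by lra. split; ring.
Qed.

Lemma reach w0 theta alpha x y : 0 < w0 -> 0 <= alpha ->
  (x / (3 * sqrt 5 / PI ^ 2)) ^ 2 + (y / (sqrt 3 / PI)) ^ 2 = alpha ^ 2 ->
  exists phi, - PI <= phi <= PI /\
     x = astar w0 theta alpha phi /\ y = bstar w0 theta alpha phi.
Proof.
intros hw ha H.
assert (PI > 0) by apply PI_RGT_0.
assert (sqrt 5 > 0) by (apply sqrt_lt_R0; lra).
assert (sqrt 3 > 0) by (apply sqrt_lt_R0; lra).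
set (p := 3 * sqrt 5 / PI ^ 2) in *. set (q := sqrt 3 / PI) in *.
assert (p > 0) by (unfold p; apply Rdiv_lt_0_compat; [lra | apply pow_lt; lra]).
assert (q > 0) by (unfold q; apply Rdiv_lt_0_compat; lra).
destruct (Req_dec alpha 0) as [Ha0|Ha0].
- subst alpha. exists 0. split; [lra|].
  assert (E1 : x / p = 0) by nra. assert (E2 : y / q = 0) by nra.
  assert (E3 : x = 0). { replace x with (x / p * p) by (field; lra). rewrite E1; ring. }
  assert (E4 : y = 0). { replace y with (y / q * q) by (field; lra). rewrite E2; ring. }
  rewrite astar_eq, bstar_eq by lra. fold p q. split; [rewrite E3|rewrite E4]; ring.
- set (s := - x / (p * alpha)). set (co := y / (q * alpha)).
  assert (Hsc : s ^ 2 + co ^ 2 = 1).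
  { unfold s, co. replace (- x / (p * alpha)) with (- (x / p) / alpha) by (field; lra).
    replace (y / (q * alpha)) with ((y / q) / alpha) by (field; lra).
    replace ((- (x / p) / alpha) ^ 2 + (y / q / alpha) ^ 2)
      with (((x / p) ^ 2 + (y / q) ^ 2) / alpha ^ 2) by (field; lra).
    rewrite H. field. lra. }
  pose proof (sin2_cos2 theta) as Ht. unfold Rsqr in Ht.
  destruct (circle (s * cos theta - co * sin theta) (co * cos theta + s * sin theta))
    as [phi [Hp [Hs Hc]]].
  { nra. }
  exists phi. split; [lra|].
  assert (Sc : sin (phi + theta) = s).
  { rewrite sin_plus, Hs, Hc. transitivity (s * (sin theta * sin theta + cos theta * cos theta)); [ring|].
    rewrite Ht; ring. }
  assert (Cc : cos (phi + theta) = co).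
  { rewrite cos_plus, Hs, Hc. transitivity (co * (sin theta * sin theta + cos theta * cos theta)); [ring|].
    rewrite Ht; ring. }
  rewrite astar_eq, bstar_eq by lra. fold p q. rewrite Sc, Cc. unfold s, co.
  split; field; lra.
Qed.

Theorem corollary2 (w0 theta amax : R) (hw0 : 0 < w0) (hamax : 0 < amax) :
  (exists A B C : R,
      0 < A /\ B * B < A * C /\
      (forall x y : R,
          (exists phi, - PI <= phi <= PI /\
                       x = astar w0 theta amax phi /\ y = bstar w0 theta amax phi)
          <-> A * x ^ 2 + 2 * B * x * y + C * y ^ 2 = 1) /\
      (forall x y : R,
          (exists alpha phi, 0 <= alpha <= amax /\ - PI <= phi <= PI /\
                       x = astar w0 theta alpha phi /\ y = bstar w0 theta alpha phi)
          <-> A * x ^ 2 + 2 * B * x * y + C * y ^ 2 <= 1)) /\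
  (forall phi, - PI <= phi <= PI ->
     exists k : R, 0 <= k /\
       forall alpha, 0 <= alpha <= amax ->
         sqrt (astar w0 theta alpha phi ^ 2 + bstar w0 theta alpha phi ^ 2) = k * alpha).
Proof.
assert (PI > 0) by apply PI_RGT_0.
assert (sqrt 5 > 0) by (apply sqrt_lt_R0; lra).
assert (sqrt 3 > 0) by (apply sqrt_lt_R0; lra).
set (p := 3 * sqrt 5 / PI ^ 2). set (q := sqrt 3 / PI).
assert (p > 0) by (unfold p; apply Rdiv_lt_0_compat; [lra | apply pow_lt; lra]).
assert (q > 0) by (unfold q; apply Rdiv_lt_0_compat; lra).
assert (Q : forall alpha phi, 
  / (p * amax) ^ 2 * astar w0 theta alpha phi ^ 2 + 2 * 0 * astar w0 theta alpha phi * bstar w0 theta alpha phi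
   + / (q * amax) ^ 2 * bstar w0 theta alpha phi ^ 2 = (alpha / amax) ^ 2).
{ intros alpha phi. rewrite astar_eq, bstar_eq by lra. fold p q.
  pose proof (sin2_cos2 (phi + theta)) as Ht. unfold Rsqr in Ht.
  transitivity ((alpha / amax) ^ 2 * (sin (phi + theta) * sin (phi + theta) + cos (phi + theta) * cos (phi + theta))).
  - field. lra.
  - rewrite Ht. ring. }
assert (Qxy : forall x y, / (p * amax) ^ 2 * x ^ 2 + 2 * 0 * x * y + / (q * amax) ^ 2 * y ^ 2
   = ((x / p) ^ 2 + (y / q) ^ 2) / amax ^ 2) by (intros; field; lra).
split.
- exists (/ (p * amax) ^ 2), 0, (/ (q * amax) ^ 2).
  assert (0 < / (p * amax) ^ 2) by (apply Rinv_0_lt_compat, pow_lt; nra).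
  assert (0 < / (q * amax) ^ 2) by (apply Rinv_0_lt_compat, pow_lt; nra).
  split; [lra|]. split; [nra|]. split.
  + intros x y; split.
    * intros [phi [_ [-> ->]]]. rewrite Q. replace (amax / amax) with 1 by (field; lra). ring.
    * intros Hq. rewrite Qxy in Hq. apply reach; try lra. fold p q.
      replace ((x / p) ^ 2 + (y / q) ^ 2) with (((x / p) ^ 2 + (y / q) ^ 2) / amax ^ 2 * amax ^ 2)
        by (field; lra). rewrite Hq. ring.
  + intros x y; split.
    * intros [alpha [phi [Ha [_ [-> ->]]]]]. rewrite Q.
      assert (0 <= alpha / amax) by (apply Rle_mult_inv_pos; lra).
      assert (alpha / amax <= 1).
      { apply Rmult_le_reg_r with amax; [lra|]. unfold Rdiv. rewrite Rmult_assoc, Rinv_l; lra. }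
      nra.
    * intros Hq. rewrite Qxy in Hq.
      set (r := (x / p) ^ 2 + (y / q) ^ 2) in *.
      assert (0 <= r) by (unfold r; nra).
      assert (r <= amax ^ 2).
      { replace r with (r / amax ^ 2 * amax ^ 2) by (field; lra).
        assert (0 < amax ^ 2) by nra. nra. }
      exists (sqrt r).
      assert (sqrt r <= amax).
      { rewrite <- (sqrt_pow2 amax) by lra. apply sqrt_le_1_alt. lra. }
      destruct (reach w0 theta (sqrt r) x y hw0 (sqrt_pos r)) as [phi Hphi].
      { rewrite pow2_sqrt by lra. reflexivity. }
      exists phi. split; [split; [apply sqrt_pos|lra]|]. exact Hphi.
- intros phi _. exists (sqrt ((p * sin (phi + theta)) ^ 2 + (q * cos (phi + theta)) ^ 2)).
  split; [apply sqrt_pos|]. intros alpha Ha.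
  rewrite astar_eq, bstar_eq by lra. fold p q.
  replace ((- p * alpha * sin (phi + theta)) ^ 2 + (q * alpha * cos (phi + theta)) ^ 2)
    with (alpha ^ 2 * ((p * sin (phi + theta)) ^ 2 + (q * cos (phi + theta)) ^ 2)) by ring.
  rewrite sqrt_mult_alt by nra. rewrite sqrt_pow2 by lra. ring.
Qed.
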